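(* Let $\mathbb{P}\subset\mathbb{R}^n$ be a polyhedron, $\mathbb{G}$ a nonempty face of $\mathbb{P}$, and $\mathfrak q\in(\mathbb{G}^* )^\circ|\mathbb{P}$. Then there is $r>0$ (depending on $\mathfrak q$) such that for all $\mathfrak n\in\mathbb{P}\setminus\mathbb{G}$ and $\mathfrak m\in\mathbb{G}$ one has $\mathrm{P}_{V(\mathbb{G})^\perp}(\mathfrak n-\mathfrak m)\ne0$ and $$\Big\langle\mathfrak q,\frac{\mathrm{P}_{V(\mathbb{G})^\perp}(\mathfrak n-\mathfrak m)}{|\mathrm{P}_{V(\mathbb{G})^\perp}(\mathfrak n-\mathfrak m)|}\Big\rangle\ge r.$$
   Context: A polyhedron is a finite intersection of closed half-spaces. For a polyhedron $\mathbb{Q}$ and a nonempty $\mathbb{G}\subset\mathbb{Q}$, $\mathbb{G}$ is a face of $\mathbb{Q}$ if there are $\mathfrak q,r$ with $\langle\mathfrak q,u\rangle=r$ on $\mathbb{G}$ and $>r$ on $\mathbb{Q}\setminus\mathbb{G}$; $(\mathbb{G}^* )^\circ|\mathbb{Q}=\{\mathfrak q\in\mathbb{R}^n\setminus\{0\}:\exists r,\langle\mathfrak q,u\rangle=r\ (u\in\mathbb{G}),\langle\mathfrak q,y\rangle>r\ (y\in\mathbb{Q}\setminus\mathbb{G})\}$. $V(\mathbb{G})=\mathrm{span}(\mathbb{G}-\mathfrak p)$ for any $\mathfrak p\in\mathbb{G}$ (the direction space of the affine hull), and $\mathrm{P}_{W}$ denotes orthogonal projection onto a subspace $W$. *)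

(* Defs.v *)
From HB Require Import structures.
From mathcomp Require Import all_boot all_order all_algebra.
From Stdlib Require Import ClassicalEpsilon.
Set Implicit Arguments. Unset Strict Implicit. Unset Printing Implicit Defensive.
Import Order.TTheory GRing.Theory Num.Theory.
Local Open Scope ring_scope.

Definition dotp (R : rcfType) (n : nat) (u v : 'rV[R]_n) : R :=
  \sum_(i < n) u 0 i * v 0 i.

Definition vnorm (R : rcfType) (n : nat) (v : 'rV[R]_n) : R :=
  Num.sqrt (dotp v v).

Definition is_polyhedron (R : rcfType) (n : nat) (P : 'rV[R]_n -> Prop) : Prop :=
  exists (k : nat) (a : 'I_k -> 'rV[R]_n) (b : 'I_k -> R),
    forall x, P x <-> (forall i, dotp (a i) x <= b i).

Definition is_face (R : rcfType) (n : nat) (Q G : 'rV[R]_n -> Prop) : Prop :=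
  (exists u, G u) /\ (forall u, G u -> Q u) /\
  exists (q : 'rV[R]_n) (r : R),
    (forall u, G u -> dotp q u = r) /\
    (forall y, Q y -> ~ G y -> r < dotp q y).

Definition in_dual_interior (R : rcfType) (n : nat) (Q G : 'rV[R]_n -> Prop)
    (q : 'rV[R]_n) : Prop :=
  q != 0 /\
  exists r : R,
    (forall u, G u -> dotp q u = r) /\
    (forall y, Q y -> ~ G y -> r < dotp q y).

(* V(G) = span (G - p), for p in G (independent of the choice of p). *)
Definition Vdir (R : rcfType) (n : nat) (G : 'rV[R]_n -> Prop) (v : 'rV[R]_n) : Prop :=
  exists p, G p /\
  exists (k : nat) (c : 'I_k -> R) (g : 'I_k -> 'rV[R]_n),
    (forall i, G (g i)) /\ v = \sum_(i < k) c i *: (g i - p).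

Definition is_projperp (R : rcfType) (n : nat) (G : 'rV[R]_n -> Prop)
    (x y : 'rV[R]_n) : Prop :=
  (forall v, Vdir G v -> dotp y v = 0) /\ Vdir G (x - y).

(* P_{V(G)^perp} x, chosen by Hilbert's epsilon (it exists and is unique). *)
Definition projperp (R : rcfType) (n : nat) (G : 'rV[R]_n -> Prop)
    (x : 'rV[R]_n) : 'rV[R]_n :=
  epsilon (inhabits 0) (is_projperp G x).

(* Main.v *)
Require Import Defs.
From HB Require Import structures.
From mathcomp Require Import all_boot all_order all_algebra.
From mathcomp Require Import ring lra.
From Stdlib Require Import ClassicalEpsilon Classical.
Set Implicit Arguments. Unset Strict Implicit. Unset Printing Implicit Defensive.
Import Order.TTheory GRing.Theory Num.Theory.
Local Open Scope ring_scope.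

Lemma dotpC (R : rcfType) n (u v : 'rV[R]_n) : dotp u v = dotp v u.
Proof. by apply: eq_bigr => i _; rewrite mulrC. Qed.

Lemma dotpDr (R : rcfType) n (u v w : 'rV[R]_n) : dotp u (v + w) = dotp u v + dotp u w.
Proof. by rewrite /dotp -big_split; apply: eq_bigr => i _; rewrite mxE mulrDr. Qed.

Lemma dotpZr (R : rcfType) n (a : R) (u v : 'rV[R]_n) : dotp u (a *: v) = a * dotp u v.
Proof. by rewrite /dotp mulr_sumr; apply: eq_bigr => i _; rewrite mxE mulrCA. Qed.

Lemma dotpNr (R : rcfType) n (u v : 'rV[R]_n) : dotp u (- v) = - dotp u v.
Proof. by rewrite -scaleN1r dotpZr mulN1r. Qed.

Lemma dotpBr (R : rcfType) n (u v w : 'rV[R]_n) : dotp u (v - w) = dotp u v - dotp u w.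
Proof. by rewrite dotpDr dotpNr. Qed.

Lemma dotp0r (R : rcfType) n (u : 'rV[R]_n) : dotp u 0 = 0.
Proof. by rewrite -(scale0r 0) dotpZr mul0r. Qed.

Lemma dotp_sumr (R : rcfType) n k (u : 'rV[R]_n) (F : 'I_k -> 'rV[R]_n) :
  dotp u (\sum_(i < k) F i) = \sum_(i < k) dotp u (F i).
Proof.
elim: k F => [|k IH] F; first by rewrite !big_ord0 dotp0r.
by rewrite !big_ord_recr /= dotpDr IH.
Qed.

Lemma dotpDl (R : rcfType) n (u v w : 'rV[R]_n) : dotp (v + w) u = dotp v u + dotp w u.
Proof. by rewrite !(dotpC _ u) dotpDr. Qed.
Lemma dotpZl (R : rcfType) n (a : R) (u v : 'rV[R]_n) : dotp (a *: v) u = a * dotp v u.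
Proof. by rewrite !(dotpC _ u) dotpZr. Qed.
Lemma dotpBl (R : rcfType) n (u v w : 'rV[R]_n) : dotp (v - w) u = dotp v u - dotp w u.
Proof. by rewrite !(dotpC _ u) dotpBr. Qed.
Lemma dotp0l (R : rcfType) n (u : 'rV[R]_n) : dotp 0 u = 0.
Proof. by rewrite dotpC dotp0r. Qed.
Lemma dotp_suml (R : rcfType) n k (u : 'rV[R]_n) (F : 'I_k -> 'rV[R]_n) :
  dotp (\sum_(i < k) F i) u = \sum_(i < k) dotp (F i) u.
Proof. by rewrite dotpC dotp_sumr; apply: eq_bigr => i _; rewrite dotpC. Qed.

Lemma dotpp_ge0 (R : rcfType) n (u : 'rV[R]_n) : 0 <= dotp u u.
Proof. by apply: sumr_ge0 => i _; rewrite -expr2 sqr_ge0. Qed.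

Lemma dotpp_eq0 (R : rcfType) n (u : 'rV[R]_n) : dotp u u = 0 -> u = 0.
Proof.
move=> /eqP; rewrite psumr_eq0; last by move=> i _; rewrite -expr2 sqr_ge0.
move=> /allP H; apply/rowP => j; rewrite mxE.
have /implyP := H j (mem_index_enum j); rewrite -expr2 sqrf_eq0 => /(_ isT) /eqP //.
Qed.

Lemma dotpp_gt0 (R : rcfType) n (u : 'rV[R]_n) : u != 0 -> 0 < dotp u u.
Proof.
move=> H; rewrite lt_def dotpp_ge0 andbT; apply/eqP => /dotpp_eq0 E.
by rewrite E eqxx in H.
Qed.

Lemma dotp_delta (R : rcfType) n (j : 'I_n) (u : 'rV[R]_n) :
  dotp (delta_mx 0 j) u = u 0 j.
Proof.
rewrite /dotp (bigD1 j) //= big1 ?addr0; first by rewrite mxE !eqxx mul1r.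
by move=> i /negbTE H; rewrite mxE H andbF mul0r.
Qed.

Definition ext (T : Type) k (f : 'I_k -> T) (x : T) (i : 'I_k.+1) : T :=
  if unlift ord_max i is Some j then f j else x.

Lemma lift_maxW k (i : 'I_k) : lift ord_max i = widen_ord (leqnSn k) i.
Proof. by apply: val_inj; apply: lift_max. Qed.

Lemma ext_widen T k (f : 'I_k -> T) x (i : 'I_k) :
  ext f x (widen_ord (leqnSn k) i) = f i.
Proof. by rewrite /ext -lift_maxW liftK. Qed.

Lemma ext_max T k (f : 'I_k -> T) x : ext f x ord_max = x.
Proof. by rewrite /ext unlift_none. Qed.

Definition incone (R : rcfType) n k (a : 'I_k -> 'rV[R]_n) (g : 'rV[R]_n) :=
  exists lam : 'I_k -> R, (forall i, 0 <= lam i) /\ g = \sum_(i < k) lam i *: a i.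

Lemma farkas_alt (R : rcfType) n k : forall (a : 'I_k -> 'rV[R]_n) g,
  incone a g \/ exists y, (forall i, dotp (a i) y <= 0) /\ 0 < dotp g y.
Proof.
elim: k => [|k IH] a g.
  case: (eqVneq g 0) => [->|gn0].
    by left; exists (fun _ => 0); split=> // ; rewrite big_ord0.
  by right; exists g; split; [case | exact: dotpp_gt0].
case: (classic (incone a g)) => [H|Hn]; first by left.
right.
pose a' := fun i : 'I_k => a (widen_ord (leqnSn k) i).
pose ak := a ord_max.
have Ha : forall i, a i = ext a' ak i.
  by move=> i; case: (unliftP ord_max i) => [j ->|->];
    [rewrite lift_maxW ext_widen | rewrite ext_max].
have Hsum : forall (lam : 'I_k.+1 -> R),
   \sum_(i < k.+1) lam i *: a i =
   \sum_(i < k) lam (widen_ord (leqnSn k) i) *: a' i + lam ord_max *: ak.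
  by move=> lam; rewrite big_ord_recr.
case: (IH a' g) => [[lam [lam0 Hg]]|[y [Hy gy]]].
  exfalso; apply: Hn; exists (ext lam 0); split.
    by move=> i; case: (unliftP ord_max i) => [j ->|->];
      [rewrite lift_maxW ext_widen | rewrite ext_max].
  by rewrite Hsum ext_max scale0r addr0 Hg; apply: eq_bigr => i _; rewrite ext_widen.
have Hforall : forall (P : 'I_k.+1 -> Prop),
    (forall i, P (widen_ord (leqnSn k) i)) -> P ord_max -> forall i, P i.
  by move=> P H1 H2 i; case: (unliftP ord_max i) => [j ->|->]; rewrite ?lift_maxW.
case: (lerP (dotp ak y) 0) => [aky|aky].
  by exists y; split=> //; apply: Hforall.
pose c := dotp ak y.
pose a'' := fun i => c *: a' i - dotp (a' i) y *: ak.
pose g'' := c *: g - dotp g y *: ak.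
case: (IH a'' g'') => [[mu [mu0 Hg'']]|[z [Hz gz]]].
  exfalso; apply: Hn.
  pose s := dotp g y - \sum_(i < k) mu i * dotp (a' i) y.
  exists (ext mu (s / c)); split.
    apply: Hforall; first by move=> i; rewrite ext_widen.
    rewrite ext_max; apply: divr_ge0; last exact: ltW.
    have : \sum_(i < k) mu i * dotp (a' i) y <= 0.
      by apply: sumr_le0 => i _; rewrite mulr_ge0_le0.
    rewrite /s; lra.
  rewrite Hsum ext_max.
  under eq_bigr => i _ do rewrite ext_widen.
  have cn0 : c != 0 by rewrite gt_eqF.
  apply: (@scalerI _ _ c) => //.
  have -> : c *: g = g'' + dotp g y *: ak by rewrite /g'' subrK.
  rewrite Hg'' /a'' scalerDr scaler_sumr.
  under [X in _ = X + _]eq_bigr => i _ do rewrite scalerA mulrC -scalerA.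
  rewrite scalerA mulrCA divff // mulr1 /s scalerBl.
  rewrite [X in X + _ = _](eq_bigr (fun i => mu i *: (c *: a' i) - (mu i * dotp (a' i) y) *: ak)); last first.
    by move=> i _; rewrite scalerBr -scalerA.
  rewrite sumrB [X in _ = _ + (_ - X)]scaler_suml.
  by rewrite -addrA (addrC (- _)).
pose w := z - (dotp ak z / c) *: y.
have cn0 : c != 0 by rewrite gt_eqF.
exists w; split.
  apply: Hforall.
    move=> i; rewrite -/(a' i) /w dotpBr dotpZr.
    have := Hz i; rewrite /a'' dotpBl !dotpZl.
    have c0 : 0 < c by [].
    move=> H.
    have -> : dotp (a' i) z - dotp ak z / c * dotp (a' i) y =
       (c * dotp (a' i) z - dotp (a' i) y * dotp ak z) / c.
      by field.
    by rewrite pmulr_lle0 ?invr_gt0.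
  rewrite -/ak /w dotpBr dotpZr -/c mulfVK //; lra.
move: gz; rewrite /w /g'' dotpBr dotpZr dotpBl !dotpZl -/c => gz.
have c0 : 0 < c by [].
have -> : dotp g z - dotp ak z / c * dotp g y = (c * dotp g z - dotp g y * dotp ak z) / c.
  by field.
by rewrite divr_gt0.
Qed.

Lemma farkas (R : rcfType) n k (a : 'I_k -> 'rV[R]_n) g :
  (forall y, (forall i, dotp (a i) y <= 0) -> dotp g y <= 0) -> incone a g.
Proof.
move=> H; case: (farkas_alt a g) => // [[y [Hy gy]]].
by have := H y Hy; lra.
Qed.


Lemma forall_ext k (P : 'I_k.+1 -> Prop) :
  (forall i, P (widen_ord (leqnSn k) i)) -> P ord_max -> forall i, P i.
Proof. by move=> H1 H2 i; case: (unliftP ord_max i) => [j ->|->]; rewrite ?lift_maxW. Qed.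

Lemma gs (R : rcfType) n L : forall (c : 'I_L -> 'rV[R]_n) x,
  exists mu : 'I_L -> R, forall l, dotp (c l) (x - \sum_(i < L) mu i *: c i) = 0.
Proof.
elim: L => [|L IH] c x; first by exists (fun _ => 0); case.
pose c' := fun i : 'I_L => c (widen_ord (leqnSn L) i).
pose cL := c ord_max.
have [mu0 H0] := IH c' x.
have [nu H1] := IH c' cL.
pose w0 := x - \sum_(i < L) mu0 i *: c' i.
pose z := cL - \sum_(i < L) nu i *: c' i.
have orth_span : forall v, (forall l, dotp (c' l) v = 0) ->
    forall (la : 'I_L -> R), dotp (\sum_(i < L) la i *: c' i) v = 0.
  move=> v Hv la; rewrite dotp_suml big1 // => i _; by rewrite dotpZl Hv mulr0.
have Hsum : forall (la : 'I_L.+1 -> R),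
   \sum_(i < L.+1) la i *: c i =
   \sum_(i < L) la (widen_ord (leqnSn L) i) *: c' i + la ord_max *: cL.
  by move=> la; rewrite big_ord_recr.
case: (eqVneq (dotp z z) 0) => [zz|zz].
  have z0 := dotpp_eq0 zz.
  exists (ext mu0 0); apply: forall_ext.
    move=> l; rewrite Hsum ext_max scale0r addr0.
    under eq_bigr => i _ do rewrite ext_widen.
    by rewrite H0.
  rewrite Hsum ext_max scale0r addr0.
  under eq_bigr => i _ do rewrite ext_widen.
  have -> : c ord_max = \sum_(i < L) nu i *: c' i by apply/eqP; rewrite -subr_eq0 -/cL -/z z0.
  rewrite orth_span // => l; exact: H0.
pose ka := dotp w0 z / dotp z z.
exists (ext (fun i => mu0 i - ka * nu i) ka).
have -> : x - \sum_(i < L.+1) ext (fun i => mu0 i - ka * nu i) ka i *: c i = w0 - ka *: z.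
  rewrite Hsum ext_max.
  under eq_bigr => i _ do rewrite ext_widen scalerBl -scalerA.
  rewrite sumrB -scaler_sumr /w0 /z scalerBr; set S1 := \sum_(i < L) _; set S2 := \sum_(i < L) _.
  rewrite opprD opprB [in RHS]opprB !addrA; congr (_ + _); exact: addrAC.
have Hz : forall l, dotp (c' l) z = 0 by move=> l; exact: H1.
apply: forall_ext.
  by move=> l; rewrite dotpBr dotpZr -/(c' l) Hz H0 mulr0 subr0.
have -> : c ord_max = z + \sum_(i < L) nu i *: c' i by rewrite /z subrK.
rewrite dotpDl dotpC orth_span; last first.
  by move=> l; rewrite dotpBr dotpZr Hz H0 mulr0 subr0.
rewrite addr0 dotpBl dotpZl /ka mulfVK //.
by rewrite dotpC subrr.
Qed.

Lemma posbound (R : rcfType) k (x s : 'I_k -> R) (Q : 'I_k -> Prop) :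
  (forall j, Q j -> 0 < s j) -> exists t, 0 < t /\ forall j, Q j -> t * `|x j| <= s j.
Proof.
move=> Hs.
suff : forall r : seq 'I_k, exists t, 0 < t /\ forall j, j \in r -> Q j -> t * `|x j| <= s j.
  by case/(_ (enum 'I_k)) => t [t0 Ht]; exists t; split=> // j; apply: Ht; rewrite mem_enum.
elim=> [|j r [t [t0 Ht]]]; first by exists 1.
case: (classic (Q j)) => Hj; last first.
  exists t; split=> // i; rewrite inE => /orP [/eqP -> //|]; exact: Ht.
have sj := Hs j Hj.
pose u := s j / (`|x j| + 1).
have u0 : 0 < u by rewrite divr_gt0 // ltr_wpDl.
exists (Order.min t u); split; first by rewrite lt_min t0 u0.
have xn := normr_ge0 (x j).
move=> i; rewrite inE => /orP [/eqP ->|ir] Qi.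
  apply: (@le_trans _ _ (u * `|x j|)); first by rewrite ler_wpM2r // ge_min lexx orbT.
  rewrite /u mulrAC ler_pdivrMr ?ltr_wpDl //; nra.
apply: le_trans (Ht i ir Qi); rewrite ler_wpM2r // ge_min lexx //.
Qed.

Lemma sum_le_const (R : rcfType) k (f : 'I_k -> R) (B : R) :
  (forall i, f i <= B) -> \sum_(i < k) f i <= k%:R * B.
Proof.
move=> H; apply: le_trans (ler_sum _ (fun i _ => H i)) _.
by rewrite sumr_const card_ord mulr_natl.
Qed.

Lemma sum_lt_const (R : rcfType) k (f : 'I_k -> R) (B : R) (j : 'I_k) :
  (forall i, f i <= B) -> f j < B -> \sum_(i < k) f i < k%:R * B.
Proof.
move=> H Hj.
have -> : k%:R * B = \sum_(i < k) B by rewrite sumr_const card_ord mulr_natl.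
rewrite (bigD1 j) //= [X in _ < X](bigD1 j) //=.
by apply: ltr_leD => //; apply: ler_sum => i _.
Qed.

Lemma dotpNl (R : rcfType) n (u v : 'rV[R]_n) : dotp (- v) u = - dotp v u.
Proof. by rewrite -scaleN1r dotpZl mulN1r. Qed.

Lemma dotp_row (R : rcfType) n k (f : 'rV[R]_n) (c : 'I_k -> 'rV[R]_n) (mu : 'I_k -> R) :
  dotp f (\sum_(l < k) mu l *: c l) = dotp (\row_l dotp f (c l)) (\row_l mu l).
Proof.
rewrite dotp_sumr [RHS]/dotp; apply: eq_bigr => l _; rewrite !mxE.
by rewrite dotpZr mulrC.
Qed.
Unset Implicit Arguments.

Theorem mainTheorem15 (R : rcfType) (n : nat) (P G : 'rV[R]_n -> Prop)
    (q : 'rV[R]_n) :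
  is_polyhedron P ->
  is_face P G ->
  in_dual_interior P G q ->
  exists r : R, 0 < r /\
    forall nn m : 'rV[R]_n, P nn -> ~ G nn -> G m ->
      projperp G (nn - m) != 0 /\
      r <= dotp q ((vnorm (projperp G (nn - m)))^-1 *: projperp G (nn - m)).
Proof.
move=> [k [a [b HP]]] [[gw Ggs] [GP _]] [q0 [r0 [Hq0 Hq1]]].
have Gchar : forall y, P y -> dotp q y <= r0 -> G y.
  move=> y Py Hy; apply: NNPP => Gn; have := Hq1 y Py Gn; lra.
have qge : forall y, P y -> r0 <= dotp q y.
  move=> y Py; case: (classic (G y)) => Gy; first by rewrite Hq0.
  exact/ltW/Hq1.
have Pa : forall y j, P y -> dotp (a j) y <= b j by move=> y j /HP; apply.
have Vorth : forall c s, (forall u, G u -> dotp c u = s) ->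
    forall v, Vdir G v -> dotp c v = 0.
  move=> c s Hc v [p [Gp [kk [cc [g [Hg ->]]]]]].
  by rewrite dotp_sumr big1 // => i _; rewrite dotpZr dotpBr !Hc // subrr mulr0.
pose I := fun i => forall u, G u -> dotp (a i) u = b i.
pose cI := fun i => if excluded_middle_informative (I i) then a i else 0.
have cIorth : forall i v, Vdir G v -> dotp (cI i) v = 0.
  move=> i v Hv; rewrite /cI; case: excluded_middle_informative => Hi.
    exact: (Vorth _ (b i)).
  exact: dotp0l.
have cIle : forall i y, (I i -> dotp (a i) y <= 0) -> dotp (cI i) y <= 0.
  move=> i y H; rewrite /cI; case: excluded_middle_informative => Hi.
    exact: H.
  by rewrite dotp0l.
have cIeq : forall i y, I i -> dotp (cI i) y = dotp (a i) y.
  by move=> i y Hi; rewrite /cI; case: excluded_middle_informative.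
have [m0 [Gm0 Hm0]] : exists m0, G m0 /\ forall j, ~ I j -> dotp (a j) m0 < b j.
  have Hw : forall j, exists g, G g /\ (~ I j -> dotp (a j) g < b j).
    move=> j; case: (classic (I j)) => Hj; first by exists gw.
    have [u [Gu Hu]] : exists u, G u /\ dotp (a j) u <> b j.
      apply: NNPP => H; apply: Hj => u Gu; apply: NNPP => H2; apply: H.
      by exists u.
    exists u; split=> // _; rewrite lt_neqAle; apply/andP; split.
      by apply/eqP.
    exact: Pa u j (GP u Gu).
  pose gf := fun j => epsilon (inhabits 0) (fun g => G g /\ (~ I j -> dotp (a j) g < b j)).
  have Hgf : forall j, G (gf j) /\ (~ I j -> dotp (a j) (gf j) < b j).
    by move=> j; exact: (epsilon_spec (inhabits 0) _ (Hw j)).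
  pose N := (k.+1)%:R : R.
  have N0 : 0 < N by rewrite ltr0n.
  have Hdot : forall c, dotp c (N^-1 *: (gw + \sum_j gf j)) =
      (dotp c gw + \sum_j dotp c (gf j)) / N.
    by move=> c; rewrite dotpZr dotpDr dotp_sumr mulrC.
  have Pm : forall j, dotp (a j) (N^-1 *: (gw + \sum_j gf j)) <= b j.
    move=> j; rewrite Hdot ler_pdivrMr //.
    have := sum_le_const (fun i => Pa _ j (GP _ (proj1 (Hgf i)))).
    have := Pa _ j (GP gw Ggs).
    rewrite /N -addn1 natrD; nra.
  exists (N^-1 *: (gw + \sum_j gf j)); split.
    apply: Gchar; first by apply/HP.
    rewrite Hdot ler_pdivrMr // Hq0 //.
    rewrite (eq_bigr (fun _ => r0)); last by move=> i _; rewrite Hq0 //; case: (Hgf i).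
    by rewrite sumr_const card_ord /N -addn1 natrD -mulr_natl; lra.
  move=> j Hj; rewrite Hdot ltr_pdivrMr //.
  have := sum_lt_const (fun i => Pa _ j (GP _ (proj1 (Hgf i)))) (proj2 (Hgf j) Hj).
  have := Pa _ j (GP gw Ggs).
  rewrite /N -addn1 natrD; nra.
have qm0 : dotp q m0 = r0 by rewrite Hq0.
have tstep : forall v, exists t, 0 < t /\ forall s, -t <= s <= t ->
    (forall i, I i -> s * dotp (a i) v <= 0) -> P (m0 + s *: v).
  move=> v.
  have [t [t0 Ht]] : exists t, 0 < t /\ forall j, ~ I j ->
      t * `|dotp (a j) v| <= b j - dotp (a j) m0.
    apply: posbound => j Hj; rewrite subr_gt0; exact: Hm0.
  exists t; split=> // s /andP [s1 s2] Hs; apply/HP => j; rewrite dotpDr dotpZr.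
  case: (classic (I j)) => Hj.
    rewrite (Hj m0 Gm0); have := Hs j Hj; lra.
  have := Ht j Hj.
  have : s * dotp (a j) v <= t * `|dotp (a j) v|.
    apply: le_trans (ler_norm _) _; rewrite normrM ler_wpM2r //.
    by rewrite ler_norml s2 andbT; lra.
  lra.
have Vintro : forall v t, 0 < t -> G (m0 + t *: v) -> Vdir G v.
  move=> v t t0 Gt; exists m0; split=> //.
  exists 1%N, (fun _ => t^-1), (fun _ => m0 + t *: v); split=> // .
  by rewrite big_ord1 addrC addKr scalerA mulVf ?gt_eqF // scale1r.
have WV : forall v, (forall i, dotp (cI i) v = 0) -> Vdir G v.
  move=> v Hv; have [t [t0 Ht]] := tstep v.
  have Hz : forall i, I i -> dotp (a i) v = 0 by move=> i Hi; rewrite -(cIeq i v Hi) Hv.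
  have P1 : P (m0 + t *: v).
    by apply: Ht; [rewrite lexx andbT; lra| move=> i Hi; rewrite Hz // mulr0].
  have P2 : P (m0 + (- t) *: v).
    by apply: Ht; [rewrite lexx /=; lra| move=> i Hi; rewrite Hz // mulr0].
  apply: (Vintro v t t0); apply: Gchar => //.
  have := qge _ P2; have := qge _ P1.
  rewrite !dotpDr !dotpZr qm0; lra.
have proj_ok : forall x, is_projperp G x (projperp G x).
  move=> x; rewrite /projperp; apply: (epsilon_spec (inhabits 0) (is_projperp G x)).
  have [mu Hmu] := gs cI x.
  exists (\sum_i mu i *: cI i); split.
    move=> v Hv; rewrite dotp_suml big1 // => i _; by rewrite dotpZl cIorth // mulr0.
  apply: WV => i; exact: Hmu i.
have span_of_orth : forall y, (forall v, Vdir G v -> dotp y v = 0) ->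
    exists mu, y = \sum_(i < k) mu i *: cI i.
  move=> y Hy; have [mu Hmu] := gs cI y; exists mu.
  have Vw := WV _ Hmu.
  have : dotp (y - \sum_(i < k) mu i *: cI i) (y - \sum_(i < k) mu i *: cI i) = 0.
    rewrite dotpBl Hy // dotp_suml big1 ?subrr // => i _.
    by rewrite dotpZl cIorth // mulr0.
  by move/dotpp_eq0/eqP; rewrite subr_eq0 => /eqP.
have bound : forall e : 'rV_n, exists tau, 0 <= tau /\ forall mu : 'I_k -> R,
    (forall i, dotp (cI i) (\sum_(l < k) mu l *: cI l) <= 0) ->
    dotp e (\sum_(l < k) mu l *: cI l) <= tau * dotp q (\sum_(l < k) mu l *: cI l).
  move=> e.
  pose alpha := fun i => \row_l dotp (cI i) (cI l) : 'rV[R]_k.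
  pose beta := \row_l dotp q (cI l) : 'rV[R]_k.
  pose eps := \row_l dotp e (cI l) : 'rV[R]_k.
  have [lam [lam0 Heps]] : incone (ext alpha beta) eps.
    apply: farkas => z Hz.
    pose y := \sum_(l < k) z 0 l *: cI l.
    have zE : z = \row_l z 0 l by apply/rowP => l; rewrite mxE.
    have Hy1 : forall i, dotp (cI i) y <= 0.
      by move=> i; rewrite /y dotp_row -zE -/(alpha i) -(ext_widen alpha beta).
    have Hy2 : dotp q y <= 0.
      by rewrite /y dotp_row -zE -/beta -(ext_max alpha beta); exact: Hz.
    have y0 : y = 0.
      have [t [t0 Ht]] := tstep y.
      have Py : P (m0 + t *: y).
        apply: Ht; first by rewrite lexx andbT; lra.
        move=> i Hi; rewrite -(cIeq i y Hi); have := Hy1 i; nra.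
      have Vy : Vdir G y.
        apply: (Vintro y t t0); apply: Gchar => //.
        rewrite dotpDr dotpZr qm0; nra.
      apply: dotpp_eq0; rewrite {1}/y dotp_suml big1 // => i _.
      by rewrite dotpZl cIorth // mulr0.
    by rewrite zE -dotp_row -/y y0 dotp0r.
  exists (lam ord_max); split=> // mu Hmu.
  rewrite !dotp_row -/eps Heps big_ord_recr ext_max /= dotpDl dotp_suml dotpZl.
  rewrite -[X in _ <= X]add0r lerD2r.
  apply: sumr_le0 => i _; rewrite ext_widen dotpZl -dotp_row.
  by rewrite mulr_ge0_le0.
pose tauf := fun e : 'rV[R]_n => epsilon (inhabits 0) (fun tau => 0 <= tau /\ forall mu : 'I_k -> R,
    (forall i, dotp (cI i) (\sum_(l < k) mu l *: cI l) <= 0) ->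
    dotp e (\sum_(l < k) mu l *: cI l) <= tau * dotp q (\sum_(l < k) mu l *: cI l)).
have Htau : forall e, 0 <= tauf e /\ forall mu : 'I_k -> R,
    (forall i, dotp (cI i) (\sum_(l < k) mu l *: cI l) <= 0) ->
    dotp e (\sum_(l < k) mu l *: cI l) <= tauf e * dotp q (\sum_(l < k) mu l *: cI l).
  by move=> e; exact: (epsilon_spec (inhabits 0) _ (bound e)).
pose T := 1 + \sum_(j < n) (tauf (delta_mx 0 j) + tauf (- delta_mx 0 j)).
have Tge : forall j, tauf (delta_mx 0 j) + tauf (- delta_mx 0 j) <= T - 1.
  move=> j; rewrite /T [1 + _]addrC addrK (bigD1 j) //= lerDl.
  by apply: sumr_ge0 => i _; apply: addr_ge0; case: (Htau (delta_mx 0 i)); case: (Htau (- delta_mx 0 i)).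
have T1 : 1 <= T.
  rewrite /T lerDl; apply: sumr_ge0 => i _; apply: addr_ge0;
    [case: (Htau (delta_mx 0 i)) | case: (Htau (- delta_mx 0 i))] => //.
pose M := (n.+1)%:R * T.
have M0 : 0 < M by rewrite /M mulr_gt0 ?ltr0n //; lra.
exists M^-1; split; first by rewrite invr_gt0.
move=> nn m Pn Gn Gm.
set x := nn - m; set y := projperp G x.
have [yorth Vxy] := proj_ok x.
have qy : dotp q y = dotp q nn - r0.
  have := Vorth q r0 Hq0 _ Vxy; rewrite dotpBr /x dotpBr (Hq0 m Gm); lra.
have s0 : 0 < dotp q y by rewrite qy subr_gt0; exact: Hq1.
have yn0 : y != 0 by apply/eqP => y0; move: s0; rewrite y0 dotp0r ltxx.
split=> //.
have [mu Hmu] := span_of_orth y yorth.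
have Hcy : forall i, dotp (cI i) (\sum_(l < k) mu l *: cI l) <= 0.
  move=> i; rewrite -Hmu; apply: cIle => Hi.
  have := cIorth i _ Vxy; rewrite dotpBr (cIeq i _ Hi) (cIeq i _ Hi) => H.
  have -> : dotp (a i) y = dotp (a i) x by lra.
  rewrite /x dotpBr (Hi m Gm); have := Pa _ i Pn; lra.
set s := dotp q y.
have Hj : forall j, `|y 0 j| <= (T - 1) * s.
  move=> j; have [t1 H1] := Htau (delta_mx 0 j); have [t2 H2] := Htau (- delta_mx 0 j).
  have := H1 mu Hcy; have := H2 mu Hcy; rewrite -Hmu dotpNl dotp_delta -/s => h2 h1.
  have := Tge j => hT.
  have p1 : 0 <= (T - 1 - tauf (delta_mx 0 j) - tauf (- delta_mx 0 j)) * s.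
    by apply: mulr_ge0; [lra | exact: ltW].
  have p2 : 0 <= tauf (delta_mx 0 j) * s by apply: mulr_ge0 => //; exact: ltW.
  have p3 : 0 <= tauf (- delta_mx 0 j) * s by apply: mulr_ge0 => //; exact: ltW.
  rewrite ler_norml; apply/andP; split.
    rewrite mulrBl !mulrDl in p1 *; lra.
  rewrite mulrBl !mulrDl in p1 *; lra.
have Ts0 : 0 <= (T - 1) * s by apply: mulr_ge0; [lra | exact: ltW].
have yy : dotp y y <= (M * s) ^+ 2.
  apply: (@le_trans _ _ (\sum_(j < n) ((T - 1) * s) ^+ 2)).
    apply: ler_sum => j _; rewrite -expr2 -real_normK ?num_real //.
    rewrite lerXn2r ?nnegrE ?normr_ge0 //.
  rewrite sumr_const card_ord -mulr_natl /M -[n.+1]addn1 natrD.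
  have h0 : 0 <= n%:R :> R by [].
  set nr := n%:R : R.
  have hu : 0 <= (T - 1) * s <= T * s by rewrite Ts0 /=; rewrite ler_wpM2r ?ltW //; lra.
  move: hu Ts0; set u := (T - 1) * s; rewrite -mulrA; set w := T * s => /andP [_ hu] Ts0.
  have h1 : u ^+ 2 <= w ^+ 2 by rewrite lerXn2r ?nnegrE //; lra.
  have h2 : nr * u ^+ 2 <= nr * w ^+ 2 by rewrite ler_wpM2l.
  have h3 : 0 <= w ^+ 2 by exact: sqr_ge0.
  have h4 : 0 <= (nr ^+ 2 + nr + 1) * w ^+ 2.
    by apply: mulr_ge0 => //; rewrite !addr_ge0 // sqr_ge0.
  apply: le_trans h2 _.
  have -> : ((nr + 1) * w) ^+ 2 = nr * w ^+ 2 + (nr ^+ 2 + nr + 1) * w ^+ 2 by ring.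
  by rewrite lerDl.
have nu0 : 0 < vnorm y by rewrite /vnorm sqrtr_gt0; exact: dotpp_gt0.
have nuM : vnorm y <= M * s.
  rewrite /vnorm -(ger0_norm (ltW (mulr_gt0 M0 s0))) -sqrtr_sqr ler_sqrt //.
  exact: sqr_ge0.
rewrite dotpZr -/s ler_pdivlMl //.
rewrite ler_pdivrMr //; by rewrite mulrC.
Qed.
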